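(* Let $N\ge1$, $D>0$, $b_1,\dots,b_N>0$, $0<r_1<\cdots<r_N$, and let $k_0$ be as in the context. For integers $k\ge k_0$ let $p^k\pm iq^k$ ($p^k,q^k\in\mathbb R$, $q^k>0$) be the two non-real roots of $P_N^k$. Then there are constants $M_2,M_3>0$ independent of $k$ such that for all sufficiently large $k\ge k_0$, $$\Big|p^k+\frac{1}{2D}\sum_{j=1}^N b_j\Big|\le\frac{M_2}{k^2},\qquad \big|q^k-(2k-1)\sqrt D\big|\le \frac{M_3}{2k-1}.$$
   Context: Standing assumptions: $N\in\mathbb N$, $D>0$, $b_i>0$, $0<r_1<\cdots<r_N$. $P_N^k(\lambda)=\big(D+\frac{\lambda^2}{(2k-1)^2}\big)\prod_{j=1}^N(\lambda+r_j)-\sum_{i=1}^N b_i\prod_{j\neq i}(\lambda+r_j)$ for $k\in\mathbb N$, a real polynomial of degree $N+2$. $k_0$ is a threshold such that for all integers $k\ge k_0$, $P_N^k$ has exactly $N$ real roots, all simple, interlacing with $-r_N<a_N^k<-r_{N-1}<\cdots<-r_1<a_1^k$, and its two remaining roots are simple non-real complex conjugates. *)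

(* Defs.v *)
From HB Require Import structures.
From mathcomp Require Import all_boot all_order all_algebra.
From mathcomp Require Import reals.
From mathcomp Require Import complex.
Set Implicit Arguments. Unset Strict Implicit. Unset Printing Implicit Defensive.
Import Order.TTheory GRing.Theory Num.Theory.
Local Open Scope ring_scope.

(* P_N^k(X) = (D + X^2/(2k-1)^2) * prod_j (X + r_j) - sum_i b_i prod_{j<>i} (X + r_j),
   a real polynomial; indices 1..N are represented by 'I_N. *)
Definition PNk (R : realType) (N : nat) (D : R) (b r : 'I_N -> R) (k : nat)
  : {poly R} :=
  (D%:P + ((2 * k)%:R - 1) ^- 2 *: 'X^2) * \prod_(j < N) ('X + (r j)%:P)
  - \sum_(i < N) b i *: \prod_(j < N | j != i) ('X + (r j)%:P).

(* Main.v *)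
Require Import Defs.
From HB Require Import structures.
From mathcomp Require Import all_boot all_order all_algebra.
From mathcomp Require Import reals.
From mathcomp Require Import complex.
From mathcomp Require Import ring lra.
Import Order.TTheory GRing.Theory Num.Theory.
Local Open Scope ring_scope.
Local Open Scope complex_scope.

Lemma cmulE {R : realType} (a b c d : R) : (a +i* b) * (c +i* d) = (a*c - b*d) +i* (a*d + b*c).
Proof. by []. Qed.
Lemma caddE {R : realType} (a b c d : R) : (a +i* b) + (c +i* d) = (a+c) +i* (b+d).
Proof. by []. Qed.
Lemma cinvE {R : realType} (a b : R) : (a +i* b)^-1 = (a / (a^+2 + b^+2)) +i* (- (b / (a^+2 + b^+2))).
Proof. by []. Qed.
Lemma crealE {R : realType} (a : R) : a%:C = a +i* 0. Proof. by []. Qed.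
Lemma cexpr2 {R : realType} (a b : R) : (a +i* b)^+2 = (a^+2 - b^+2) +i* (2 * a * b).
Proof. rewrite expr2 cmulE. congr (_ +i* _); ring. Qed.

Lemma termC {R : realType} (bb a q : R) : (bb%:C * (a +i* q)^-1) =
  (bb * a / (a^+2 + q^+2)) +i* (- (bb * q / (a^+2 + q^+2))).
Proof.
rewrite cinvE crealE cmulE; congr (_ +i* _); ring.
Qed.

Lemma sumC {R : realType} (I: finType) (P : pred I) (x y : I -> R) :
  \sum_(i | P i) (x i +i* y i) = (\sum_(i | P i) x i) +i* (\sum_(i | P i) y i).
Proof.
apply: (big_rec3 (fun (a : R[i]) b c => a = b +i* c)) => // i a1 b1 c1 _ ->; by rewrite caddE.
Qed.

Lemma evalP {R : realType} N (D e : R) (b r : 'I_N -> R) (f : {rmorphism R -> R[i]}) (z : R[i]) :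
  (map_poly f ((D%:P + e *: 'X^2) * \prod_(j < N) ('X + (r j)%:P)
  - \sum_(i < N) b i *: \prod_(j < N | j != i) ('X + (r j)%:P))).[z] =
  (f D + f e * z^+2) * \prod_(j < N) (z + f (r j))
  - \sum_(i < N) f (b i) * \prod_(j < N | j != i) (z + f (r j)).
Proof.
rewrite rmorphB rmorphM rmorphD rmorph_sum rmorph_prod /=.
rewrite (map_polyC f) (map_polyZ f) (map_polyXn f).
have hX : forall x, (map_poly f ('X + x%:P)).[z] = z + f x.
  by move=> x; rewrite (map_polyXaddC f) !hornerE.
rewrite hornerD hornerM hornerD hornerC hornerZ hornerXn horner_prod hornerN horner_sum.
congr (_ * _ - _).
  by apply: eq_bigr => j _; apply: hX.
apply: eq_bigr => i _.
have -> : forall P : {poly R}, map_poly f (b i *: P) = f (b i) *: map_poly f P.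
  by move=> P; rewrite (map_polyZ f).
rewrite hornerZ; congr (_ * _).
have -> : forall (P : 'I_N -> {poly R}) , map_poly f (\prod_(j < N | j != i) P j) = \prod_(j < N | j != i) map_poly f (P j).
  by move=> P; rewrite rmorph_prod.
rewrite horner_prod.
by apply: eq_bigr => j _; apply: hX.
Qed.

Lemma root_eqs {R : realType} N (D e p q : R) (b r : 'I_N -> R) : 0 < q ->
  root (map_poly (fun x : R => x%:C)
   ((D%:P + e *: 'X^2) * \prod_(j < N) ('X + (r j)%:P)
  - \sum_(i < N) b i *: \prod_(j < N | j != i) ('X + (r j)%:P))) (p +i* q) ->
  D + e * (p^+2 - q^+2) = \sum_i (b i * (p + r i) / ((p + r i)^+2 + q^+2)) /\
  e * (2 * p * q) = - \sum_i (b i * q / ((p + r i)^+2 + q^+2)).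
Proof.
move=> q0 H.
set z := p +i* q.
have E := evalP _ D e b r (real_complex R) z.
have {H E} H : (D%:C + e%:C * z^+2) * \prod_(j < N) (z + (r j)%:C)
  - \sum_(i < N) (b i)%:C * \prod_(j < N | j != i) (z + (r j)%:C) = 0.
  by rewrite -E; apply/eqP; exact: H.
have wE : forall j, z + (r j)%:C = (p + r j) +i* q by move=> j; rewrite /z crealE caddE addr0.
have w0 : forall j, z + (r j)%:C != 0.
  move=> j; rewrite wE eq_complex /= negb_and; apply/orP; right; by rewrite gt_eqF.
pose Q := \prod_(j < N) (z + (r j)%:C).
have Q0 : Q != 0 by apply/prodf_neq0 => j _; exact: w0.
have Qi : forall i, \prod_(j < N | j != i) (z + (r j)%:C) = Q * (z + (r i)%:C)^-1.
  by move=> i; rewrite /Q [in RHS](bigD1 i) //= mulrC mulrA mulVf ?mul1r.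
rewrite [X in _ - X](eq_bigr (fun i => Q * ((b i)%:C * (z + (r i)%:C)^-1))) in H; last by move=> i _; rewrite Qi mulrCA.
move: H; rewrite -/Q.
rewrite -mulr_sumr mulrC -mulrBr => /eqP; rewrite mulf_eq0 (negbTE Q0) /= subr_eq0 => /eqP.
under eq_bigr do rewrite wE termC.
rewrite sumC /z crealE cexpr2 crealE cmulE caddE => -[] h1 h2.
split.
  by rewrite -h1; ring.
by rewrite -sumrN -h2; ring.
Qed.

Definition cP0 {R : realType} (B D : R) := 4 * B / D.
Definition cA1 {R : realType} (B X D : R) := (cP0 B D + X) * 8 * B / D.
Definition cA2 {R : realType} (B X D : R) := 2 * cP0 B D ^+ 2 + cA1 B X D.
Definition cA3 {R : realType} (B X D : R) := cA2 B X D + 2 * cP0 B D * X + X ^+ 2.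
Definition cA4 {R : realType} (B X D : R) := cA2 B X D + cP0 B D ^+ 2.
Definition cM2 {R : realType} (B X D : R) := 4 * cA3 B X D * B / D / D.

Lemma est (R : realType) N (D e p q B X : R) (b r w : 'I_N -> R) :
  0 < D -> 0 < e -> 0 < q -> (forall i, 0 < b i) -> (forall i, 0 < r i) ->
  (forall i, r i <= X) -> 0 <= X ->
  8 * e * X ^+ 2 <= D -> B = \sum_i b i ->
  (forall i, w i * ((p + r i) ^+ 2 + q ^+ 2) = b i) ->
  D + e * (p ^+ 2 - q ^+ 2) = \sum_i w i * (p + r i) ->
  e * (2 * p * q) = - \sum_i w i * q ->
  `|p + B / (2 * D)| <= cM2 B X D * e /\ `|e * q ^+ 2 - D| <= cA4 B X D * e.
Proof.
move=> D0 e0 q0 b0 r0 rX X0 hX hB hw hRe hIm.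
have n0 i : 0 < (p + r i) ^+ 2 + q ^+ 2.
  have h1 := sqr_ge0 (p + r i); have h2 : 0 < q ^+ 2 by rewrite exprn_gt0.
  lra.
have w0 i : 0 < w i.
  have h1 := hw i; have h2 := b0 i; have h3 := n0 i; nra.
set T := \sum_i w i.
have T0 : 0 <= T by apply: sumr_ge0 => i _; exact: ltW.
have hS : \sum_i w i * q = T * q by rewrite /T mulr_suml.
have hT : 2 * e * p = - T.
  have : (2 * e * p + T) * q = 0 by rewrite mulrDl -hS; lra.
  move/eqP; rewrite mulf_eq0 (gt_eqF q0) orbF => /eqP; lra.
have p0 : p <= 0 by nra.
have hA : \sum_i w i * (p + r i) <= X * T.
  rewrite /T mulr_sumr; apply: ler_sum => i _.
  have := w0 i; have := rX i; nra.
have hXT : X * T = - (2 * e * p * X).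
  by rewrite (_ : T = - (2 * e * p)); [ring | lra].
have hu : D / 2 <= e * (p ^+ 2 + q ^+ 2).
  have := mulr_ge0 (ltW e0) (sqr_ge0 (2 * p + X)); nra.
have hs : 4 * X ^+ 2 <= p ^+ 2 + q ^+ 2 by nra.
have hn i : D / 8 <= e * ((p + r i) ^+ 2 + q ^+ 2).
  have h1 : (p ^+ 2 + q ^+ 2) / 4 <= (p + r i) ^+ 2 + q ^+ 2.
    have := sqr_ge0 (p + 2 * r i); have := r0 i; have := rX i; nra.
  nra.
have wb i : w i <= 8 * e * b i / D.
  rewrite ler_pdivlMr //; rewrite -hw; have := hn i; have := w0 i; nra.
have TB : T <= 8 * e * B / D.
  rewrite hB mulr_sumr mulr_suml; apply: ler_sum => i _; exact: wb.
have B0 : 0 <= B by rewrite hB; apply: sumr_ge0 => i _; exact: ltW.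
have pP : - p <= cP0 B D.
  rewrite /cP0; nra.
have P0pos : 0 <= cP0 B D by rewrite /cP0; apply: divr_ge0 => //; [nra | exact: ltW].
have hp2 : p ^+ 2 <= cP0 B D ^+ 2 by nra.
have hAabs : `|\sum_i w i * (p + r i)| <= cA1 B X D * e.
  apply: le_trans (ler_norm_sum _ _ _) _.
  apply: (@le_trans _ _ (\sum_i (cP0 B D + X) * w i)).
    apply: ler_sum => i _; rewrite ler_norml.
    have h1 := w0 i; have h2 := rX i; have h3 := r0 i; apply/andP; split; nra.
  rewrite -mulr_sumr -/T /cA1.
  have : 0 <= cP0 B D + X by lra.
  nra.
move: hAabs; rewrite ler_norml => /andP [hA1 hA2].
have hu2 : `|e * (p ^+ 2 + q ^+ 2) - D| <= cA2 B X D * e.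
  rewrite ler_norml /cA2; have h1 : 0 <= e * p ^+ 2 by nra.
  apply/andP; split; nra.
move: hu2; rewrite ler_norml => /andP [hu1 hu3].
split; last first.
  rewrite ler_norml /cA4; apply/andP; split; nra.
have hn2 i : `|e * ((p + r i) ^+ 2 + q ^+ 2) - D| <= cA3 B X D * e.
  have h1 := r0 i; have h2 := rX i.
  have h3 : - (2 * cP0 B D * X + X ^+ 2) <= 2 * p * r i + r i ^+ 2 <= 2 * cP0 B D * X + X ^+ 2.
    apply/andP; split; nra.
  move/andP: h3 => [h3 h4].
  rewrite ler_norml /cA3; apply/andP; split; nra.
pose K := 8 * e * (cA3 B X D * e) / D / D.
have termb i : `|e * b i / D - w i| <= b i * K.
  have -> : e * b i / D - w i = w i * ((e * ((p + r i) ^+ 2 + q ^+ 2) - D) / D).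
    rewrite -hw; field; exact: lt0r_neq0.
  rewrite normrM (ger0_norm (ltW (w0 i))) normrM normfV (ger0_norm (ltW D0)).
  rewrite (_ : b i * K = (8 * e * b i / D) * ((cA3 B X D * e) / D)); last by rewrite /K; ring.
  apply: ler_pM => //; first exact: ltW.
  by rewrite divr_ge0 // ltW.
  by rewrite ler_pM2r ?invr_gt0.
have key : 2 * e * (p + B / (2 * D)) = \sum_i (e * b i / D - w i).
  rewrite sumrB -mulr_suml -mulr_sumr -hB -/T.
  rewrite (_ : T = - (2 * e * p)); last by lra.
  field; exact: lt0r_neq0.
have hsum : `|2 * e * (p + B / (2 * D))| <= B * K.
  rewrite key; apply: le_trans (ler_norm_sum _ _ _) _.
  rewrite hB mulr_suml; apply: ler_sum => i _; exact: termb.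
move: hsum; rewrite normrM (ger0_norm (_ : 0 <= 2 * e)); last by lra.
rewrite /K /cM2 => h.
set x := `|p + B / (2 * D)| in h *.
have hD1 : 0 < D^-1 by rewrite invr_gt0.
nra.
Qed.


Local Close Scope complex_scope.

Theorem lemma4p3 (R : realType) (N : nat) (D : R) (b r : 'I_N -> R) :
  (0 < N)%N -> 0 < D -> (forall i, 0 < b i) -> (forall i, 0 < r i) ->
  (forall i j : 'I_N, (i < j)%N -> r i < r j) ->
  exists M2 M3 : R, 0 < M2 /\ 0 < M3 /\
  exists K : nat, forall k : nat, (K <= k)%N ->
    forall p q : R, 0 < q ->
      root (map_poly (fun x : R => (x%:C)%C) (PNk D b r k)) (p +i* q)%C ->
      `|p + (\sum_(j < N) b j) / (2 * D)| <= M2 / (k%:R ^+ 2) /\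
      `|q - ((2 * k)%:R - 1) * Num.sqrt D| <= M3 / ((2 * k)%:R - 1).
Proof.
move=> N0 D0 b0 r0 _.
set B := \sum_(j < N) b j.
pose X := \sum_(j < N) r j.
have X0 : 0 <= X by apply: sumr_ge0 => j _; exact: ltW.
have rX i : r i <= X.
  rewrite /X (bigD1 i) //= lerDl; apply: sumr_ge0 => j _; exact: ltW.
have B0 : 0 < B.
  rewrite /B (bigD1 (Ordinal N0)) //=.
  have h1 := b0 (Ordinal N0).
  have h2 : 0 <= \sum_(j < N | j != Ordinal N0) b j by apply: sumr_ge0 => j _; exact: ltW.
  lra.
have P0 : 0 < cP0 B D by rewrite /cP0 divr_gt0 // mulr_gt0.
have A1 : 0 < cA1 B X D.
  rewrite /cA1 divr_gt0 // mulr_gt0 // mulr_gt0 //; lra.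
have A2 : 0 < cA2 B X D by rewrite /cA2; have := sqr_ge0 (cP0 B D); lra.
have A3 : 0 < cA3 B X D.
  rewrite /cA3; have := sqr_ge0 X; have := mulr_ge0 (ltW P0) X0; lra.
have A4 : 0 < cA4 B X D by rewrite /cA4; have := sqr_ge0 (cP0 B D); lra.
have sD0 : 0 < Num.sqrt D by rewrite sqrtr_gt0.
exists (cM2 B X D), (cA4 B X D / Num.sqrt D).
split; first by rewrite /cM2 !divr_gt0 // !mulr_gt0.
split; first by rewrite divr_gt0.
exists (Num.trunc (8 * X ^+ 2 / D)).+1.
move=> k hk p q q0 hroot.
have kR : 8 * X ^+ 2 / D < k%:R.
  apply: lt_le_trans (truncnS_gt _) _; by rewrite ler_nat.
have k1 : 1 <= k%:R :> R by rewrite ler1n; apply: leq_trans hk.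
pose c := (2 * k)%:R - 1 : R.
have cE : c = 2 * k%:R - 1 by rewrite /c natrM.
have ck : k%:R <= c by lra.
have c0 : 0 < c by lra.
pose e := c ^- 2.
have e0 : 0 < e by rewrite /e invr_gt0 exprn_gt0.
have ec : e * c ^+ 2 = 1 by rewrite /e mulVf // expf_neq0 // lt0r_neq0.
have hX : 8 * e * X ^+ 2 <= D.
  have h1 : k%:R <= c ^+ 2 by nra.
  have h2 : 8 * X ^+ 2 < k%:R * D by rewrite -ltr_pdivrMr.
  have h3 : 8 * X ^+ 2 <= D * c ^+ 2 by nra.
  nra.
have [hRe hIm] := @root_eqs R N D e p q b r q0 hroot.
pose w i := b i / ((p + r i) ^+ 2 + q ^+ 2).
have n0 i : 0 < (p + r i) ^+ 2 + q ^+ 2.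
  have h1 := sqr_ge0 (p + r i); have h2 : 0 < q ^+ 2 by rewrite exprn_gt0.
  lra.
have hw i : w i * ((p + r i) ^+ 2 + q ^+ 2) = b i by rewrite /w divfK // lt0r_neq0.
have hRe' : D + e * (p ^+ 2 - q ^+ 2) = \sum_i w i * (p + r i).
  by rewrite hRe; apply: eq_bigr => i _; rewrite /w mulrAC.
have hIm' : e * (2 * p * q) = - \sum_i w i * q.
  by rewrite hIm; congr (- _); apply: eq_bigr => i _; rewrite /w mulrAC.
have [h1 h2] := @est R N D e p q B X b r w D0 e0 q0 b0 r0 rX X0 hX (erefl B) hw hRe' hIm'.
split.
  apply: le_trans h1 _.
  rewrite ler_pM2l; last by rewrite /cM2 !divr_gt0 // !mulr_gt0.
  rewrite /e lef_pV2 ?posrE ?exprn_gt0 //; last by lra.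
  nra.
have sDE : Num.sqrt D ^+ 2 = D by rewrite sqr_sqrtr // ltW.
have h3 : `|q ^+ 2 - c ^+ 2 * D| <= cA4 B X D.
  have -> : q ^+ 2 - c ^+ 2 * D = c ^+ 2 * (e * q ^+ 2 - D).
    by rewrite mulrBr mulrA (mulrC (c ^+ 2) e) ec mul1r.
  rewrite normrM ger0_norm ?sqr_ge0 //.
  apply: le_trans (ler_wpM2l (sqr_ge0 c) h2) _.
  by rewrite mulrCA [c ^+ 2 * e]mulrC ec mulr1.
have fact : q ^+ 2 - c ^+ 2 * D = (q - c * Num.sqrt D) * (q + c * Num.sqrt D).
  by rewrite -{1}sDE; ring.
have qc0 : 0 <= q + c * Num.sqrt D.
  by apply: addr_ge0; [exact: ltW | exact: mulr_ge0 (ltW c0) (ltW sD0)].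
rewrite fact normrM (ger0_norm qc0) in h3.
rewrite -/c ler_pdivlMr // ler_pdivlMr //.
set y := `|q - c * Num.sqrt D| in h3 *.
have y0 : 0 <= y by rewrite /y normr_ge0.
nra.
Qed.
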